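(* Consider the 4-state Jukes–Cantor coalescent mixture (CK) model on the rooted 3-taxon species tree $((a:\ell_a,b:\ell_b):\ell_{ab},\,c:\ell_c)$ with non-negative edge lengths. If $\ell_a=\ell_{ab}+\ell_c$, then the resulting probability tensor $P=(p_{ijk})$ (indices ordered $a,b,c$) is invariant under exchanging the $a$ and $c$ indices: $p_{ijk}=p_{kji}$ for all $i,j,k$.
   Context: The CK Jukes–Cantor model on a rooted species tree with edge lengths (not necessarily ultrametric): with a constant population size, a gene tree with one lineage sampled per taxon is drawn under the multispecies coalescent (lineages coalesce only within populations, i.e., edges of the species tree including the infinite root population), and a site evolves on the gene tree by the 4-state Jukes–Cantor process (rate matrix with all off-diagonal entries equal, uniform stationary distribution) started from the uniform distribution at the gene tree root, with edge lengths converted by a fixed scalar mutation rate. The site pattern probability tensor is the mixture over gene trees. The notation $(a:\ell_a,b:\ell_b):\ell_{ab}$ means the cherry $\{a,b\}$ with pendant edge lengths $\ell_a,\ell_b$ joined by an edge of length $\ell_{ab}$ to the root, and $c:\ell_c$ is a pendant edge of length $\ell_c$ from the root. *)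

(* Defs.v *)
From HB Require Import structures.
From mathcomp Require Import all_boot all_order all_algebra.
From mathcomp Require Import all_classical all_reals all_analysis.
Set Implicit Arguments. Unset Strict Implicit. Unset Printing Implicit Defensive.
Import Order.TTheory GRing.Theory Num.Theory.
Import numFieldNormedType.Exports.
Local Open Scope classical_set_scope.
Local Open Scope ring_scope.

Section CK.
Variable R : realType.

(* 4-state Jukes-Cantor transition probability after (coalescent) time t,
   mutation rate mu: rate matrix Q with Q x y = mu/3 (x <> y), Q x x = -mu,
   so exp(tQ) x y = 1/4 + 3/4 e^{-4 mu t/3} if x = y, 1/4 - 1/4 e^{-4 mu t/3} else. *)
Definition jc (mu t : R) (x y : 'I_4) : R :=
  if x == y then 4^-1 + 3 / 4 * expR (- (4 / 3) * mu * t)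
  else 4^-1 - 4^-1 * expR (- (4 / 3) * mu * t).

(* Site pattern probability (states xp xq xr) on the rooted gene tree
   ((p:lp, q:lq):lin, r:lr), root state uniform. *)
Definition cherry_prob (mu lp lq lin lr : R) (xp xq xr : 'I_4) : R :=
  \sum_(z < 4) \sum_(w < 4)
     4^-1 * jc mu lin z w * jc mu lp w xp * jc mu lq w xq * jc mu lr z xr.

(* Multispecies coalescent on the species tree ((a:la,b:lb):lab, c:lc)
   (edge lengths in coalescent units, pairwise coalescence rate 1,
   one lineage per taxon), mixed with the Jukes-Cantor site distribution.
   Case 1: a and b coalesce in the ab population at time s in [0,lab]
     (density e^{-s}); then with c in the root population at time t
     (density e^{-t}) after its start.
   Case 2: no coalescence in ab (prob e^{-lab}); in the root the first
     coalescence occurs at time t1 (density 3 e^{-3 t1}), each of the 3 pairs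
     with prob 1/3, the last one after a further t2 (density e^{-t2}). *)
Definition ck_case1 (mu la lb lab lc : R) (i j k : 'I_4) : \bar R :=
  (\int[lebesgue_measure]_(s in `[0%R, lab]%classic)
     \int[lebesgue_measure]_(t in `[0%R, +oo[%classic)
       (expR (- s) * expR (- t) *
        cherry_prob mu (la + s) (lb + s) (lab - s + t) (lc + t) i j k)%:E)%E.

Definition ck_case2 (mu la lb lab lc : R) (i j k : 'I_4) : \bar R :=
  let A := la + lab in let B := lb + lab in let C := lc in
  (\int[lebesgue_measure]_(t1 in `[0%R, +oo[%classic)
     \int[lebesgue_measure]_(t2 in `[0%R, +oo[%classic)
       (expR (- lab) * (3 * expR (- (3 * t1))) * expR (- t2) * 3^-1 *
        (cherry_prob mu (A + t1) (B + t1) t2 (C + t1 + t2) i j k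
       + cherry_prob mu (A + t1) (C + t1) t2 (B + t1 + t2) i k j
       + cherry_prob mu (B + t1) (C + t1) t2 (A + t1 + t2) j k i))%:E)%E.

Definition ck_tensor (mu la lb lab lc : R) (i j k : 'I_4) : R :=
  fine (ck_case1 mu la lb lab lc i j k + ck_case2 mu la lb lab lc i j k)%E.

End CK.

(* Main.v *)
Require Import Defs.
From HB Require Import structures.
From mathcomp Require Import all_boot all_order all_algebra.
From mathcomp Require Import all_classical all_reals all_analysis.
From mathcomp Require Import ring lra.
Import Order.TTheory GRing.Theory Num.Theory.
Import numFieldNormedType.Exports.
Set Implicit Arguments. Unset Strict Implicit. Unset Printing Implicit Defensive.
Local Open Scope classical_set_scope.
Local Open Scope ring_scope.

Section S.
Variable R : realType.
Notation mu := (@lebesgue_measure R).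

Lemma int_exp_inf_int (r a : R) : 0 < r ->
  mu.-integrable `[0%R, +oo[%classic (fun t => (a * expR (- (r * t)))%:E).
Proof.
move=> r0.
have H := integrable_exponential_pdf r0.
rewrite /exponential_pdf -restrict_EFin -integrable_mkcond in H; last first.
  exact: measurable_itv.
apply: (eq_integrable _ _ _ _ (integrableZl _ (a / r) H)); try exact: measurable_itv.
move=> x _ /=; rewrite -EFinM; congr EFin.
rewrite mulNr; field; exact: lt0r_neq0.

Qed.

Lemma int_exp_inf (r a : R) : 0 < r ->
  (\int[mu]_(t in `[0%R, +oo[%classic) (a * expR (- (r * t)))%:E = (a / r)%:E)%E.
Proof.
move=> r0.
have H := integral_exponential_pdf r0.
have I := integrable_exponential_pdf r0.
rewrite /exponential_pdf -restrict_EFin -integrable_mkcond in I; last first.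
  exact: measurable_itv.
transitivity (\int[mu]_(t in `[0%R, +oo[%classic) ((a / r)%:E * (r * expR (- r * t))%:E))%E.
  apply: eq_integral => x _ /=; rewrite -EFinM; congr EFin.
  rewrite mulNr; field; exact: lt0r_neq0.
rewrite (integralZl _ I); last exact: measurable_itv.
rewrite integral_mkcond restrict_EFin.
by rewrite H mule1.
Qed.
Lemma int_exp_itv_int (r a L : R) : 0 < r ->
  mu.-integrable `[0%R, L]%classic (fun t => (a * expR (- (r * t)))%:E).
Proof.
move=> r0; move: (int_exp_inf_int a r0); apply: integrableS.
- exact: measurable_itv.
- exact: measurable_itv.
- by move=> x /=; rewrite !in_itv /= => /andP[-> _].
Qed.

Lemma int_exp_itv (r a L : R) : 0 < r -> 0 <= L ->
  (\int[mu]_(t in `[0%R, L]%classic) (a * expR (- (r * t)))%:E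
    = (a * (1 - expR (- (r * L))) / r)%:E)%E.
Proof.
move=> r0; rewrite le_eqVlt => /orP[/eqP <-|L0].
  by rewrite set_itv1 integral_set1 mulr0 oppr0 expR0 subrr mulr0 mul0r.
have H := exponential_prob_itv0c r L0.
transitivity (\int[mu]_(t in `[0%R, L]%classic) ((a / r)%:E * (exponential_pdf r t)%:E))%E.
  apply: eq_integral => x; rewrite inE /= in_itv /= => /andP[x0 _].
  rewrite exponential_pdfE // -EFinM; congr EFin.
  rewrite mulNr; field; exact: lt0r_neq0.
rewrite integralZl; last 2 first.
- exact: measurable_itv.
- move: (integrable_exponential_pdf r0); apply: integrableS.
  + exact: measurableT.
  + exact: measurable_itv.
  + by [].
rewrite /exponential_prob in H; rewrite H -EFinB -EFinM; congr EFin.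
rewrite mulNr; field; exact: lt0r_neq0.
Qed.
Definition th (m x : R) := expR (- (4 / 3) * m * x).
Definition kk (m : R) := 4 / 3 * m.

Lemma kk_ge0 m : 0 <= m -> 0 <= kk m.
Proof. by move=> m0; rewrite /kk mulr_ge0. Qed.

Lemma expR_lin m c (n : nat) t :
  expR (- ((c + n%:R * kk m) * t)) = expR (- (c * t)) * th m t ^+ n.
Proof. by rewrite /th -expRM_natl -expRD /kk; congr expR; ring. Qed.

Lemma int_poly_inf m c a0 a1 a2 a3 : 0 <= m -> 0 < c ->
  (\int[mu]_(t in `[0%R, +oo[%classic)
     (expR (- (c * t)) * (a0 + a1 * th m t + a2 * th m t ^+ 2 + a3 * th m t ^+ 3))%:E
  = (a0 / c + a1 / (c + kk m) + a2 / (c + 2 * kk m) + a3 / (c + 3 * kk m))%:E)%E.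
Proof.
move=> m0 c0.
have k0 := kk_ge0 m0.
have r1 : 0 < c + kk m by rewrite ltr_pwDl.
have r2 : 0 < c + 2 * kk m by rewrite ltr_pwDl // mulr_ge0.
have r3 : 0 < c + 3 * kk m by rewrite ltr_pwDl // mulr_ge0.
have mD : measurable (`[0%R, +oo[%classic : set (measurableTypeR R)) by exact: measurable_itv.
transitivity (\int[mu]_(t in `[0%R, +oo[%classic)
   ((a0 * expR (- (c * t)))%:E + (a1 * expR (- ((c + kk m) * t)))%:E
    + (a2 * expR (- ((c + 2 * kk m) * t)))%:E + (a3 * expR (- ((c + 3 * kk m) * t)))%:E))%E.
  apply: eq_integral => t _.
  rewrite -!EFinD; congr EFin.
  have -> : c + kk m = c + 1%:R * kk m by rewrite mul1r.
  rewrite !expR_lin; ring.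
have i0 := int_exp_inf_int a0 c0.
have i1 := int_exp_inf_int a1 r1.
have i2 := int_exp_inf_int a2 r2.
have i3 := int_exp_inf_int a3 r3.
rewrite integralD //; last first.
  by apply: integrableD => //; apply: integrableD.
rewrite integralD //; last first.
  by apply: integrableD.
rewrite integralD //.
rewrite !int_exp_inf //.
Qed.
Lemma int_poly_itv m c a0 a1 a2 a3 L : 0 <= m -> 0 < c -> 0 <= L ->
  (\int[mu]_(t in `[0%R, L]%classic)
     (expR (- (c * t)) * (a0 + a1 * th m t + a2 * th m t ^+ 2 + a3 * th m t ^+ 3))%:E
  = (a0 * (1 - expR (- (c * L))) / c
     + a1 * (1 - expR (- (c * L)) * th m L) / (c + kk m)
     + a2 * (1 - expR (- (c * L)) * th m L ^+ 2) / (c + 2 * kk m)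
     + a3 * (1 - expR (- (c * L)) * th m L ^+ 3) / (c + 3 * kk m))%:E)%E.
Proof.
move=> m0 c0 L0.
have k0 := kk_ge0 m0.
have r1 : 0 < c + kk m by rewrite ltr_pwDl.
have r2 : 0 < c + 2 * kk m by rewrite ltr_pwDl // mulr_ge0.
have r3 : 0 < c + 3 * kk m by rewrite ltr_pwDl // mulr_ge0.
have e1 : c + kk m = c + 1%:R * kk m by rewrite mul1r.
transitivity (\int[mu]_(t in `[0%R, L]%classic)
   ((a0 * expR (- (c * t)))%:E + (a1 * expR (- ((c + kk m) * t)))%:E
    + (a2 * expR (- ((c + 2 * kk m) * t)))%:E + (a3 * expR (- ((c + 3 * kk m) * t)))%:E))%E.
  apply: eq_integral => t _.
  rewrite -!EFinD; congr EFin.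
  rewrite e1 !expR_lin; ring.
have i0 := int_exp_itv_int a0 L c0.
have i1 := int_exp_itv_int a1 L r1.
have i2 := int_exp_itv_int a2 L r2.
have i3 := int_exp_itv_int a3 L r3.
rewrite integralD //; last first.
  by apply: integrableD => //; apply: integrableD.
rewrite integralD //; last first.
  by apply: integrableD.
rewrite integralD //.
rewrite !int_exp_itv // -!EFinD; congr EFin.
rewrite e1 !expR_lin; ring.
Qed.
Definition hh (x y : 'I_4) : R := if x == y then 3 else -1.
Definition gg (x y z : 'I_4) : R :=
  if (x == y) && (y == z) then 6 else if [|| x == y, y == z | x == z] then -2 else 2.

Lemma cherryE m lp lq lin lr xp xq xr :
  cherry_prob m lp lq lin lr xp xq xr =
  64^-1 * (1 + hh xp xq * th m lp * th m lq + hh xp xr * th m lp * th m lin * th m lr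
    + hh xq xr * th m lq * th m lin * th m lr
    + gg xp xq xr * th m lp * th m lq * th m lin * th m lr).
Proof.
rewrite /cherry_prob /jc -/(th m lp) -/(th m lq) -/(th m lin) -/(th m lr).
move: (th m lp) (th m lq) (th m lin) (th m lr) => A B C D.
rewrite !big_ord_recr !big_ord0 /=.
case: xp => [[|[|[|[|?]]]] Hp] //; case: xq => [[|[|[|[|?]]]] Hq] //;
 case: xr => [[|[|[|[|?]]]] Hr] //; rewrite /hh /gg /=; by field.
Qed.

End S.

Section M.
Variable R : realType.
Notation mu := (@lebesgue_measure R).
Notation T := th.

Lemma thD (m x y : R) : T m (x + y) = T m x * T m y.
Proof. by rewrite /th mulrDr expRD. Qed.
Lemma thB (m x y : R) : T m (x - y) = T m x / T m y.
Proof. by rewrite /th mulrBr expRD expRN. Qed.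
Lemma thN (m x : R) : T m (- x) = (T m x)^-1.
Proof. by rewrite /th mulrN expRN. Qed.
Lemma th_neq0 (m x : R) : T m x != 0.
Proof. by rewrite /th gt_eqF // expR_gt0. Qed.

Lemma hhC x y : hh R x y = hh R y x.
Proof. by rewrite /hh eq_sym. Qed.

Lemma ggP x y z : [/\ gg R x z y = gg R x y z, gg R y z x = gg R x y z,
  gg R z y x = gg R x y z, gg R y x z = gg R x y z & gg R z x y = gg R x y z].
Proof.
case: x => [[|[|[|[|?]]]] Hx] //; case: y => [[|[|[|[|?]]]] Hy] //;
 case: z => [[|[|[|[|?]]]] Hz] //; by rewrite /gg.
Qed.

Lemma case1_inner (m la lb lab lc : R) (i j k : 'I_4) (s : R) : 0 <= m ->
  (\int[lebesgue_measure]_(t in `[0%R, +oo[%classic)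
       (expR (- s) * expR (- t) *
        cherry_prob m (la + s) (lb + s) (lab - s + t) (lc + t) i j k)%:E)%E
  = (expR (- s) / 64 * (1 + hh R i j * T m (la + s) * T m (lb + s)) / 1
     + 0 / (1 + kk m)
     + expR (- s) / 64 * (hh R i k * T m (la + s) * T m lab * T m lc / T m s
          + hh R j k * T m (lb + s) * T m lab * T m lc / T m s
          + gg R i j k * T m (la + s) * T m (lb + s) * T m lab * T m lc / T m s)
       / (1 + 2 * kk m)
     + 0 / (1 + 3 * kk m))%:E.
Proof.
move=> m0.
rewrite -(int_poly_inf _ _ _ _ m0 ltr01).
apply: eq_integral => t _; congr EFin.
rewrite cherryE mul1r !thD !thN.
field.
exact: th_neq0.
Qed.

Definition case1V (m la lb lab lc : R) (i j k : 'I_4) : R :=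
  let b0 := 64^-1 * (1 + (hh R i k * T m la * T m lab * T m lc
                          + hh R j k * T m lb * T m lab * T m lc) / (1 + 2 * kk m)) in
  let b1 := 64^-1 * gg R i j k * T m la * T m lb * T m lab * T m lc / (1 + 2 * kk m) in
  let b2 := 64^-1 * hh R i j * T m la * T m lb in
  b0 * (1 - expR (- (1 * lab))) / 1
  + b1 * (1 - expR (- (1 * lab)) * T m lab) / (1 + kk m)
  + b2 * (1 - expR (- (1 * lab)) * T m lab ^+ 2) / (1 + 2 * kk m)
  + 0 * (1 - expR (- (1 * lab)) * T m lab ^+ 3) / (1 + 3 * kk m).

Lemma case1E (m la lb lab lc : R) (i j k : 'I_4) : 0 <= m -> 0 <= lab ->
  ck_case1 m la lb lab lc i j k = (case1V m la lb lab lc i j k)%:E.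
Proof.
move=> m0 lab0.
have k0 := kk_ge0 m0.
have d1 : 1 + kk m != 0 by rewrite lt0r_neq0 // ltr_pwDl.
have d2 : 1 + 2 * kk m != 0 by rewrite lt0r_neq0 // ltr_pwDl // mulr_ge0.
have d3 : 1 + 3 * kk m != 0 by rewrite lt0r_neq0 // ltr_pwDl // mulr_ge0.
rewrite /ck_case1.
transitivity (\int[mu]_(s in `[0%R, lab]%classic)
  (expR (- (1 * s)) * (
    64^-1 * (1 + (hh R i k * T m la * T m lab * T m lc
                          + hh R j k * T m lb * T m lab * T m lc) / (1 + 2 * kk m))
  + 64^-1 * gg R i j k * T m la * T m lb * T m lab * T m lc / (1 + 2 * kk m) * T m s
  + 64^-1 * hh R i j * T m la * T m lb * T m s ^+ 2
  + 0 * T m s ^+ 3))%:E)%E.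
  apply: eq_integral => s _; rewrite case1_inner //; congr EFin.
  rewrite mul1r !thD; field.
  by rewrite d1 d2 d3 th_neq0.
by rewrite int_poly_itv.
Qed.

Lemma case2_inner (m la lb lab lc : R) (i j k : 'I_4) (t1 : R) : 0 <= m ->
  (\int[lebesgue_measure]_(t2 in `[0%R, +oo[%classic)
     (expR (- lab) * (3 * expR (- (3 * t1))) * expR (- t2) * 3^-1 *
      (cherry_prob m (la + lab + t1) (lb + lab + t1) t2 (lc + t1 + t2) i j k
     + cherry_prob m (la + lab + t1) (lc + t1) t2 (lb + lab + t1 + t2) i k j
     + cherry_prob m (lb + lab + t1) (lc + t1) t2 (la + lab + t1 + t2) j k i))%:E)%E
  = (expR (- lab) * expR (- (3 * t1)) / 64 *
       (3 + hh R i j * T m (la + lab + t1) * T m (lb + lab + t1)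
          + hh R i k * T m (la + lab + t1) * T m (lc + t1)
          + hh R j k * T m (lb + lab + t1) * T m (lc + t1)) / 1
     + 0 / (1 + kk m)
     + expR (- lab) * expR (- (3 * t1)) / 64 *
       (hh R i k * T m (la + lab + t1) * T m (lc + t1)
        + hh R j k * T m (lb + lab + t1) * T m (lc + t1)
        + gg R i j k * T m (la + lab + t1) * T m (lb + lab + t1) * T m (lc + t1)
        + hh R i j * T m (la + lab + t1) * T m (lb + lab + t1)
        + hh R k j * T m (lc + t1) * T m (lb + lab + t1)
        + gg R i k j * T m (la + lab + t1) * T m (lc + t1) * T m (lb + lab + t1)
        + hh R j i * T m (lb + lab + t1) * T m (la + lab + t1)
        + hh R k i * T m (lc + t1) * T m (la + lab + t1)
        + gg R j k i * T m (lb + lab + t1) * T m (lc + t1) * T m (la + lab + t1))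
       / (1 + 2 * kk m)
     + 0 / (1 + 3 * kk m))%:E.
Proof.
move=> m0.
rewrite -(int_poly_inf _ _ _ _ m0 ltr01).
apply: eq_integral => t _; congr EFin.
rewrite !cherryE mul1r !thD.
by field.
Qed.

Definition case2V (m la lb lab lc : R) (i j k : 'I_4) : R :=
  let TA := T m (la + lab) in let TB := T m (lb + lab) in let TC := T m lc in
  let D := 1 + 2 * kk m in
  let b0 := expR (- lab) / 64 * 3 in
  let b2 := expR (- lab) / 64 * (hh R i j * TA * TB + hh R i k * TA * TC + hh R j k * TB * TC
     + (hh R i k * TA * TC + hh R j k * TB * TC + hh R i j * TA * TB + hh R k j * TC * TB
        + hh R j i * TB * TA + hh R k i * TC * TA) / D) in
  let b3 := expR (- lab) / 64 * (gg R i j k + gg R i k j + gg R j k i) * TA * TB * TC / D in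
  b0 / 3 + 0 / (3 + kk m) + b2 / (3 + 2 * kk m) + b3 / (3 + 3 * kk m).

Lemma case2E (m la lb lab lc : R) (i j k : 'I_4) : 0 <= m ->
  ck_case2 m la lb lab lc i j k = (case2V m la lb lab lc i j k)%:E.
Proof.
move=> m0.
have k0 := kk_ge0 m0.
have d1 : 1 + kk m != 0 by rewrite lt0r_neq0 // ltr_pwDl.
have d2 : 1 + 2 * kk m != 0 by rewrite lt0r_neq0 // ltr_pwDl // mulr_ge0.
have d3 : 1 + 3 * kk m != 0 by rewrite lt0r_neq0 // ltr_pwDl // mulr_ge0.
rewrite /ck_case2 /=.
transitivity (\int[mu]_(t1 in `[0%R, +oo[%classic)
  (expR (- (3 * t1)) * (
    expR (- lab) / 64 * 3
  + 0 * T m t1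
  + expR (- lab) / 64 * (hh R i j * T m (la + lab) * T m (lb + lab) + hh R i k * T m (la + lab) * T m lc
     + hh R j k * T m (lb + lab) * T m lc
     + (hh R i k * T m (la + lab) * T m lc + hh R j k * T m (lb + lab) * T m lc
        + hh R i j * T m (la + lab) * T m (lb + lab) + hh R k j * T m lc * T m (lb + lab)
        + hh R j i * T m (lb + lab) * T m (la + lab) + hh R k i * T m lc * T m (la + lab))
       / (1 + 2 * kk m)) * T m t1 ^+ 2
  + expR (- lab) / 64 * (gg R i j k + gg R i k j + gg R j k i) * T m (la + lab) * T m (lb + lab)
       * T m lc / (1 + 2 * kk m) * T m t1 ^+ 3))%:E)%E.
  apply: eq_integral => t1 _; rewrite case2_inner //; congr EFin.
  rewrite !thD; field.
  by rewrite d1 d2 d3.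
by rewrite int_poly_inf // ltr0n.
Qed.
End M.

Unset Implicit Arguments.

Theorem propositionA1 (R : realType) (mu la lb lab lc : R) :
  0 <= mu -> 0 <= la -> 0 <= lb -> 0 <= lab -> 0 <= lc ->
  la = lab + lc ->
  forall i j k : 'I_4,
    ck_tensor mu la lb lab lc i j k = ck_tensor mu la lb lab lc k j i.
Proof.
move=> m0 la0 lb0 lab0 lc0 hla i j k.
rewrite /ck_tensor.
rewrite (case1E la lb lc i j k m0 lab0) (case1E la lb lc k j i m0 lab0).
rewrite (case2E la lb lab lc i j k m0) (case2E la lb lab lc k j i m0).
rewrite -!EFinD.
have fE : forall x : R, fine x%:E = x by [].
rewrite !fE.
have k0 := kk_ge0 m0.
have d1 : 1 + kk mu != 0 by rewrite lt0r_neq0 // ltr_pwDl.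
have d2 : 1 + 2 * kk mu != 0 by rewrite lt0r_neq0 // ltr_pwDl // mulr_ge0.
have d3 : 1 + 3 * kk mu != 0 by rewrite lt0r_neq0 // ltr_pwDl // mulr_ge0.
have e1 : 3 + kk mu != 0 by rewrite lt0r_neq0 // ltr_pwDl.
have e2 : 3 + 2 * kk mu != 0 by rewrite lt0r_neq0 // ltr_pwDl // mulr_ge0.
have e3 : 3 + 3 * kk mu != 0 by rewrite lt0r_neq0 // ltr_pwDl // mulr_ge0.
case: (ggP R i j k) => g1 g2 g3 g4 g5.
rewrite /case1V /case2V; cbv beta zeta.
rewrite (hhC R j i) (hhC R k i) (hhC R k j) g1 g2 g3 g4 g5.
rewrite hla !mul1r !thD.
move: (expR (- lab)) (th mu lab) (th mu lb) (th mu lc) (hh R i j) (hh R i k) (hh R j k) (gg R i j k) => E A B C h1 h2 h3 g.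
move: (kk mu) d1 d2 d3 e1 e2 e3 => K d1 d2 d3 e1 e2 e3.
field.
by rewrite d1 d2 d3 e1 e2 e3.
Qed.
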